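(* Let $\mathbb{F}$ be a finite field and $f\colon\mathbb{F}^n\times[m]\to\mathbb{F}$ be such that the map $x\mapsto (f(x,1),\dots,f(x,m))$ is $k$-wise independent. Suppose there is a non-adaptive static data structure for $f$ with space $s\ge 2$ and query time $t=2$, and suppose $k>8\log(s)$. Then \[ s \;\ge\; m - \frac{16\, m\log(s)}{k}. \]
   Context: A function $F\colon\mathbb{F}^n\to\mathbb{F}^m$ is $k$-wise independent if for every set of $k$ output coordinates, when $x$ is uniform on $\mathbb{F}^n$, the restriction of $F(x)$ to these coordinates is uniformly distributed on $\mathbb{F}^k$. A non-adaptive static data structure with space $s$ and query time $t$ for $f\colon\mathbb{F}^n\times[m]\to\mathbb{F}$ consists of an arbitrary preprocessing map $x\mapsto P(x)\in\mathbb{F}^s$ and, for each query $i\in[m]$, a fixed set of at most $t$ cell positions (independent of $x$) together with an arbitrary function of those cells' contents that equals $f(x,i)$ for all $x$. Logarithms are base 2. *)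

(* Defs.v *)
From HB Require Import structures.
From mathcomp Require Import all_boot all_order all_algebra all_field.
From mathcomp Require Import reals exp.
Set Implicit Arguments. Unset Strict Implicit. Unset Printing Implicit Defensive.
Import Order.TTheory GRing.Theory Num.Theory.
Local Open Scope ring_scope.

Definition log2 (R : realType) (x : R) : R := ln x / ln 2.

(* F : finite field; inputs x in F^n are {ffun 'I_n -> F};
   f x i is the i-th output, i : 'I_m (= [m]). *)

(* k-wise independence: for every set S of k output coordinates, F(x)
   restricted to S is uniform on F^S when x is uniform on F^n, i.e. every
   assignment a of values to the coordinates in S is hit by exactly
   |F|^n / |F|^k inputs. *)
Definition kwise_independent (F : finFieldType) (n m k : nat)
  (f : {ffun 'I_n -> F} -> 'I_m -> F) : Prop :=
  forall (S : {set 'I_m}), #|S| = k ->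
  forall (a : {ffun 'I_m -> F}),
    (#|[set x : {ffun 'I_n -> F} | [forall i in S, f x i == a i]]|
       * #|F| ^ k)%N = (#|F| ^ n)%N.

Definition nonadaptive_ds (F : finFieldType) (n m : nat)
  (f : {ffun 'I_n -> F} -> 'I_m -> F) (s t : nat) : Prop :=
  exists (P : {ffun 'I_n -> F} -> {ffun 'I_s -> F})
         (Q : 'I_m -> {set 'I_s})
         (g : 'I_m -> {ffun 'I_s -> F} -> F),
    [/\ forall i, (#|Q i| <= t)%N,
        forall i (c c' : {ffun 'I_s -> F}),
          (forall j, j \in Q i -> c j = c' j) -> g i c = g i c'
      & forall x i, f x i = g i (P x)].

(* Main.v *)
Require Import Defs.
From HB Require Import structures.
From mathcomp Require Import all_boot all_order all_algebra all_field.
From mathcomp Require Import reals exp.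
From mathcomp Require Import zify lra.
Import Order.TTheory GRing.Theory Num.Theory.

Set Implicit Arguments. Unset Strict Implicit. Unset Printing Implicit Defensive.

Lemma card_bigcup_le (I T : finType) (P : {set I}) (F : I -> {set T}) :
  #|\bigcup_(i in P) F i| <= \sum_(i in P) #|F i|.
Proof.
elim/big_ind2: _ => //; first by rewrite cards0.
move=> n1 X n2 Y h1 h2; have [h _] := leq_card_setU X Y; apply: leq_trans h _; exact: leq_add.
Qed.

Lemma two_sub (T : finType) (X : {set T}) a b :
  #|X| <= 2 -> a \in X -> b \in X -> a != b -> X \subset [set a; b].
Proof.
move=> h aX bX ab; apply/subsetP => c cX; apply/negPn/negP => cn.
have : #|c |: [set a; b]| <= #|X|.
  apply: subset_leq_card; apply/subsetP => z; rewrite !inE => hz; case/orP: hz => [|/orP[]] /eqP -> //.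
rewrite cardsU1 cards2 (negbTE cn) ab /=.
by move=> /leq_trans /(_ h).
Qed.

Lemma card_sum (I : finType) (A : {set I}) (P : pred I) :
  #|[set e in A | P e]| = \sum_(e in A) (P e : nat).
Proof.
rewrite -sum1_card big_mkcond [RHS]big_mkcond /=; apply: eq_bigr => e _.
by rewrite inE; case: (e \in A); case: (P e).
Qed.

Section Graph.
Variables (s m : nat).

Definition VS (Q : 'I_m -> {set 'I_s}) (S : {set 'I_m}) := \bigcup_(e in S) Q e.
Definition deg (Q : 'I_m -> {set 'I_s}) (A : {set 'I_m}) (x : 'I_s) :=
  #|[set e in A | x \in Q e]|.

Section BFS.
Variables (A : {set 'I_m}) (Q : 'I_m -> {set 'I_s}) (e0 : 'I_m) (rho : 'I_s).
Hypothesis Q2 : forall e, e \in A -> #|Q e| <= 2.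
Hypothesis deg3 : forall x, deg Q A x != 0 -> 2 < deg Q A x.
Hypothesis e0A : e0 \in A.
Hypothesis rhoe0 : rho \in Q e0.

Fixpoint B r := if r is r'.+1 then
   B r' :|: \bigcup_(e in A | Q e :&: B r' != set0) Q e else [set rho].

Definition N := s.+1.
Definition dep u := find (fun r => u \in B r) (iota 0 N).

Lemma B_mono i j : i <= j -> B i \subset B j.
Proof.
move=> /subnK <-; elim: (j - i) => [|d IH] //=.
by apply: subset_trans IH _; rewrite ?addSn /=; exact: subsetUl.
Qed.

Lemma rhoB r : rho \in B r.
Proof. by apply: (subsetP (B_mono (leq0n r))); rewrite /= set11. Qed.

Lemma depP u r : r < N -> u \in B r -> dep u <= r /\ u \in B (dep u).
Proof.
move=> rN uB.
have hs : has (fun r => u \in B r) (iota 0 N).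
  by apply/hasP; exists r => //; rewrite mem_iota.
have dN : dep u < N by rewrite -[N](size_iota 0) -has_find.
split.
  rewrite leqNgt; apply/negP => /(before_find 0).
  by rewrite nth_iota // uB.
by have := nth_find 0 hs; rewrite nth_iota.
Qed.

Lemma dep_min u j : j < dep u -> u \notin B j.
Proof.
move=> jd; have := before_find 0 jd.
have : dep u <= N by rewrite -[N](size_iota 0) find_size.
by move=> dN; rewrite nth_iota ?(leq_trans jd) // => ->.
Qed.

Lemma dep_rho : dep rho = 0.
Proof. by have [] := depP (r := 0) (ltn0Sn _) (rhoB 0); rewrite leqn0 => /eqP. Qed.

Lemma dep0 u r : r < N -> u \in B r -> dep u = 0 -> u = rho.
Proof. by move=> rN uB d0; have [_] := depP rN uB; rewrite d0 /= inE => /eqP. Qed.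

Definition pe u := odflt e0 [pick e in A | (u \in Q e) && (Q e :&: B (dep u).-1 != set0)].
Definition par u := if u == rho then rho else odflt rho [pick y in Q (pe u) :&: B (dep u).-1].

Lemma peP u r : r < N -> u \in B r -> u != rho ->
  [/\ pe u \in A, u \in Q (pe u), par u \in Q (pe u), par u \in B (dep u).-1 & 0 < dep u].
Proof.
move=> rN uB ur.
have [dr uBd] := depP rN uB.
case dE: (dep u) => [|d].
  by move: (dep0 rN uB dE); move/eqP: ur.
have uBd' : u \notin B d by apply: dep_min; rewrite dE.
move: uBd; rewrite dE /= inE (negbTE uBd') /= => /bigcupP[e /andP[eA eB] uQe].
rewrite /par (negbTE ur) /pe dE /=.
case: pickP => [e' /andP[e'A /andP[uQ' ne]]|/(_ e)]; last by rewrite eA uQe eB.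
case: pickP => [y|]; last by move/set0Pn: ne => [y yi] /(_ y); rewrite yi.
by rewrite inE => /andP[yQ yB]; split.
Qed.

Lemma par_dep u r : r < N -> u \in B r -> u != rho -> dep (par u) < dep u.
Proof.
move=> rN uB ur; have [_ _ _ pB dp] := peP rN uB ur.
have [dr _] := depP rN uB.
have [h _] := depP (r := (dep u).-1) (leq_ltn_trans (leq_pred _) (leq_ltn_trans dr rN)) pB.
by apply: leq_ltn_trans h _; rewrite prednK.
Qed.

Lemma par_B u r : r < N -> u \in B r -> par u \in B r.
Proof.
move=> rN uB; case: (eqVneq u rho) => [->|ur]; first by rewrite /par eqxx rhoB.
have [_ _ _ pB _] := peP rN uB ur; have [dr _] := depP rN uB.
by apply: (subsetP (B_mono _)) pB; apply: leq_trans (leq_pred _) dr.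
Qed.

Lemma pe_sub u r : r < N -> u \in B r -> u != rho -> Q (pe u) \subset [set u; par u].
Proof.
move=> rN uB ur; have [pA uQ pQ pB dp] := peP rN uB ur.
apply: two_sub => //; first exact: Q2.
apply/eqP => up; move: pB; rewrite -up; apply/negP/dep_min.
by rewrite prednK.
Qed.

Lemma pe_inj r : r < N -> {in B r :\ rho &, injective pe}.
Proof.
move=> rN u w; rewrite !inE => /andP[ur uB] /andP[wr wB] pe_uw.
apply/eqP/negPn/negP => uw.
have h1 : u = par w.
  have := pe_sub rN wB wr; rewrite -pe_uw => /subsetP/(_ u).
  have [_ uQ _ _ _] := peP rN uB ur.
  by move/(_ uQ); rewrite !inE (negbTE uw) => /eqP.
have h2 : w = par u.
  have := pe_sub rN uB ur; rewrite pe_uw => /subsetP/(_ w).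
  have [_ wQ _ _ _] := peP rN wB wr.
  by move/(_ wQ); rewrite !inE eq_sym (negbTE uw) => /eqP.
have := par_dep rN uB ur; have := par_dep rN wB wr.
by rewrite -h1 -h2 => a b; move: (ltn_trans a b); rewrite ltnn.
Qed.


Hypothesis Qne : forall e, e \in A -> Q e != set0.

Definition E r := [set e in A | Q e \subset B r].
Definition T r := pe @: (B r :\ rho).

Lemma T_sub r : r < N -> T r \subset E r.
Proof.
move=> rN; apply/subsetP => e /imsetP[u /setD1P[ur uB] ->].
have [pA _ _ _ _] := peP rN uB ur.
rewrite inE pA /=; apply: subset_trans (pe_sub rN uB ur) _.
apply/subsetP => z; rewrite !inE => /orP[]/eqP ->//; exact: par_B.
Qed.

Lemma card_T r : r < N -> #|T r| = #|B r| - 1.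
Proof.
move=> rN; rewrite /T card_in_imset; last exact: pe_inj.
by rewrite [#|B r|](cardsD1 rho) rhoB add1n subn1.
Qed.

Lemma card_E r : r < N -> #|E r| = #|T r| + #|E r :\: T r|.
Proof.
move=> rN; rewrite -(cardsID (T r) (E r)) (setIidPr (T_sub rN)) //.
Qed.

Lemma BV u r : u \in B r -> deg Q A u != 0.
Proof.
elim: r u => [|r IH] u /=.
  rewrite inE => /eqP ->; rewrite /deg -lt0n card_gt0; apply/set0Pn; exists e0.
  by rewrite inE e0A rhoe0.
rewrite inE => /orP[/IH //|/bigcupP[e /andP[eA _] uQ]].
rewrite /deg -lt0n card_gt0; apply/set0Pn; exists e; by rewrite inE eA uQ.
Qed.

Lemma grow r : r.+1 < N -> 3 * #|B r| <= #|E r| + #|E r.+1|.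
Proof.
move=> rN.
have h1 : 3 * #|B r| <= \sum_(u in B r) deg Q A u.
  rewrite mulnC -sum_nat_const; apply: leq_sum => u uB.
  exact: deg3 (BV uB).
apply: leq_trans h1 _.
rewrite /deg (eq_bigr (fun u => \sum_(e in A) (u \in Q e : nat))); last first.
  by move=> u _; rewrite card_sum.
rewrite exchange_big /=.
have -> : #|E r| + #|E r.+1| = \sum_(e in A) ((e \in E r) + (e \in E r.+1) : nat).
  rewrite big_split /= -!card_sum; congr (_ + _); apply: eq_card => e;
  by rewrite !inE; case: (e \in A).
apply: leq_sum => e eA.
rewrite -card_sum.
have hsub : [set x in B r | x \in Q e] = Q e :&: B r.
  by apply/setP => x; rewrite !inE andbC.
have -> : [set x in B r | x \in Q e] = [set x in B r | x \in Q e] by [].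
rewrite hsub !inE eA /=.
case: (boolP (Q e \subset B r)) => [sub|nsub].
  have -> : Q e \subset B r.+1 by apply: subset_trans sub (B_mono (leqnSn r)).
  by rewrite (setIidPl sub) Q2.
rewrite add0n.
case: (eqVneq (Q e :&: B r) set0) => [->|ne]; first by rewrite cards0.
have -> : Q e \subset B r.+1.
  by apply/subsetP => x xQ; rewrite /= inE; apply/orP; right; apply/bigcupP; exists e; rewrite ?eA.
have : #|Q e :&: B r| < #|Q e|.
  by apply: proper_card; rewrite properEneq subsetIl andbT; apply: contra nsub => /eqP <-; rewrite subsetIr.
by move=> lt; have := leq_trans lt (Q2 eA); rewrite ltnS.
Qed.


Lemma Bcard r : r < N -> 0 < #|B r|.
Proof. by move=> _; apply/card_gt0P; exists rho; exact: rhoB. Qed.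

Lemma double R : R < N -> (forall j, j <= R -> #|E j :\: T j| <= 1) ->
  forall j, j <= R -> 2 ^ j <= #|B j|.
Proof.
move=> RN hN; elim=> [|j IH] jR; first by rewrite expn0 Bcard // (leq_ltn_trans (leq0n R) RN).
have jN : j.+1 < N by apply: leq_ltn_trans jR RN.
have jN' : j < N by apply: ltn_trans jN.
have hE : forall i, i <= R -> #|E i| <= #|B i|.
  move=> i iR; have iN : i < N by apply: leq_ltn_trans iR RN.
  rewrite card_E // card_T //; have := hN i iR; have := Bcard iN.
  move: #|B i| #|E i :\: T i| => a b; case: a => // a _; rewrite subn1 /=.
  by move=> hb; rewrite -addn1 leq_add2l.
have := grow jN.
have h1 := hE j (ltnW jR); have h2 := hE j.+1 jR.
have := IH (ltnW jR).
rewrite expnS; move: #|B j| #|B j.+1| #|E j| #|E j.+1| h1 h2 => a b c d h1 h2 h3 h4.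
have : 3 * a <= a + b by apply: leq_trans h4 (leq_add h1 h2).
rewrite (mulSn 2 a)%N leq_add2l => h5.
by apply: leq_trans h5; rewrite mul2n -mul2n leq_mul2l.
Qed.

Lemma ltrs : trunc_log 2 s < s.
Proof.
have s0 : 0 < s by apply: leq_ltn_trans (leq0n rho) (ltn_ord rho).
have /andP[h _] := trunc_log_bounds (isT : 1 < 2) s0.
by apply: leq_trans h; apply: ltn_expl.
Qed.

Lemma exists_r : exists r, r <= (trunc_log 2 s).+1 /\ 1 < #|E r :\: T r|.
Proof.
have RN : (trunc_log 2 s).+1 < N by rewrite /N ltnS ltrs.
case: (boolP [exists j : 'I_(trunc_log 2 s).+2, 1 < #|E j :\: T j|]) => [/existsP[j hj]|hn].
  by exists j; rewrite -ltnS ltn_ord.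
have : 2 ^ (trunc_log 2 s).+1 <= #|B (trunc_log 2 s).+1|.
  apply: double RN _ _ (leqnn _) => j jR; rewrite leqNgt; apply/negP => h.
  by move/existsP: hn; apply; exists (Ordinal (jR : j < (trunc_log 2 s).+2)).
have := trunc_log_ltn s (isT : 1 < 2).
move=> h1 h2; have := leq_trans h1 h2; rewrite ltnNge.
by move/negP; case; apply: leq_trans (max_card _) _; rewrite card_ord.
Qed.


Lemma iter_B r a j : r < N -> a \in B r -> iter j par a \in B r.
Proof. by move=> rN aB; elim: j => //= j IH; exact: par_B. Qed.

Lemma iter_dep r a j : r < N -> a \in B r -> dep (iter j par a) <= dep a - j.
Proof.
move=> rN aB; elim: j => [|j IH]; first by rewrite subn0.
rewrite iterS; set u := iter j par a.
have uB : u \in B r by exact: iter_B.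
case: (eqVneq u rho) => [->|ur]; first by rewrite /par eqxx dep_rho.
have := par_dep rN uB ur => h; rewrite subnS -ltnS.
apply: leq_trans h _; apply: leq_trans IH _; exact: leqSpred.
Qed.

Lemma iter_rho r a : r < N -> a \in B r -> iter r par a = rho.
Proof.
move=> rN aB; have [dr _] := depP rN aB.
have := iter_dep r rN aB; have -> : dep a - r = 0 by apply/eqP; rewrite subn_eq0.
rewrite leqn0 => /eqP h.
exact: dep0 rN (iter_B r rN aB) h.
Qed.

Definition anc r a := [set iter (nat_of_ord j) par a | j : 'I_r.+1].

Lemma construct r e1 e2 : r < N -> e1 \in E r :\: T r -> e2 \in E r :\: T r -> e1 != e2 ->
  exists D : {set 'I_m}, [/\ D \subset A, #|VS Q D| < #|D| & #|D| <= 4 * r.+1 + 1].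
Proof.
move=> rN; rewrite !inE => /andP[e1T /andP[e1A e1B]] /andP[e2T /andP[e2A e2B]] e12.
pose X := \bigcup_(a in Q e1 :|: Q e2) anc r a.
have XB : X \subset B r.
  apply/bigcupsP => a; rewrite inE => aQ.
  have aB : a \in B r by case/orP: aQ => aQ; [exact: (subsetP e1B)|exact: (subsetP e2B)].
  by apply/subsetP => u /imsetP[j _ ->]; exact: iter_B.
have QX : Q e1 :|: Q e2 \subset X.
  apply/subsetP => a aQ; apply/bigcupP; exists a => //.
  by apply/imsetP; exists ord0.
have rhoX : rho \in X.
  have /set0Pn[a aQ] := Qne e1A.
  apply/bigcupP; exists a; first by rewrite inE aQ.
  have aB : a \in B r by exact: (subsetP e1B).
  by apply/imsetP; exists ord_max => //=; rewrite iter_rho.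
have parX : forall u, u \in X -> par u \in X.
  move=> u /bigcupP[a aQ /imsetP[j _ ->]].
  have aB : a \in B r by exact: (subsetP XB) (subsetP QX a aQ).
  apply/bigcupP; exists a => //.
  have [jr|] := ltnP j r.
    by apply/imsetP; exists (Ordinal (jr : j.+1 < r.+1)).
  move=> rj; have jr : nat_of_ord j = r by apply/eqP; rewrite eqn_leq rj -ltnS ltn_ord.
  rewrite jr iter_rho // /par eqxx.
  by apply/imsetP; exists ord_max => //=; rewrite iter_rho.
have cX : #|X| <= 4 * r.+1.
  have := card_bigcup_le (Q e1 :|: Q e2) (anc r); rewrite -/X => hX.
  apply: leq_trans hX _.
  have h2 : \sum_(a in Q e1 :|: Q e2) #|anc r a| <= \sum_(a in Q e1 :|: Q e2) r.+1.
    apply: leq_sum => a _; apply: leq_trans (leq_imset_card _ _) _.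
    by rewrite card_ord.
  apply: leq_trans h2 _.
  rewrite sum_nat_const leq_mul2r /=.
  have [h _] := leq_card_setU (Q e1) (Q e2); apply: leq_trans h _.
  exact: (leq_add (Q2 e1A) (Q2 e2A)).
pose TX := pe @: (X :\ rho).
have cTX : #|TX| = #|X| - 1.
  rewrite card_in_imset; first by rewrite [#|X|](cardsD1 rho) rhoX add1n subn1.
  move=> u w /setD1P[ur uX] /setD1P[wr wX]; apply: (pe_inj rN); apply/setD1P; split => //;
    exact: (subsetP XB).
have TXT : TX \subset T r by apply: imsetS; apply: setSD.
have TXA : TX \subset A.
  by apply: subset_trans TXT _; apply: subset_trans (T_sub rN) _; apply/subsetP => e; rewrite inE => /andP[].
have e1TX : e1 \notin TX by apply: contra e1T; exact: (subsetP TXT).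
have e2TX : e2 \notin TX by apply: contra e2T; exact: (subsetP TXT).
exists (e1 |: (e2 |: TX)); split.
- by rewrite !subUset !sub1set e1A e2A TXA.
- have -> : #|e1 |: (e2 |: TX)| = #|X| + 1.
    rewrite !cardsU1 !inE negb_or e12 e1TX e2TX cTX.
    have X0 : 0 < #|X| by apply/card_gt0P; exists rho.
    by rewrite /= add1n add1n subn1 prednK // addn1.
  rewrite addn1 ltnS; apply: subset_leq_card; apply/bigcupsP => e; rewrite !inE.
  case/orP => [/eqP->|/orP[/eqP->|]].
  + exact: subset_trans (subsetUl _ _) QX.
  + exact: subset_trans (subsetUr _ _) QX.
  case/imsetP => u /setD1P[ur uX] ->.
  have uB : u \in B r by exact: (subsetP XB).
  apply: subset_trans (pe_sub rN uB ur) _.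
  by apply/subsetP => z; rewrite !inE => /orP[]/eqP->//; exact: parX.
- rewrite !cardsU1 !inE negb_or e12 e1TX e2TX cTX.
  have X0 : 0 < #|X| by apply/card_gt0P; exists rho.
  by rewrite /= add1n add1n subn1 prednK // addn1 ltnS.
Qed.

End BFS.

Lemma lemmaA (A : {set 'I_m}) (Q : 'I_m -> {set 'I_s}) :
  (forall e, e \in A -> #|Q e| <= 2) ->
  (forall x, deg Q A x != 0 -> 2 < deg Q A x) -> A != set0 ->
  exists D : {set 'I_m}, [/\ D \subset A, #|VS Q D| < #|D| & #|D| <= 4 * (trunc_log 2 s).+2 + 1].
Proof.
move=> Q2 deg3 /set0Pn[e0 e0A].
case: (boolP [exists e in A, Q e == set0]) => [/existsP[e /andP[eA /eqP Qe]]|hne].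
  exists [set e]; split; first by rewrite sub1set.
    by rewrite /VS big_set1 Qe cards0 cards1.
  by rewrite cards1 addn1 ltnS leq0n.
have Qne : forall e, e \in A -> Q e != set0.
  move=> e eA; apply/negP => /eqP h; move/existsP: hne; apply; exists e; by rewrite eA h eqxx.
have /set0Pn[rho rhoe0] := Qne e0 e0A.
have [r [rR hr]] := exists_r Q2 deg3 e0A rhoe0.
have /card_gt1P [e1 [e2 [e1N e2N e12]]] := hr.
have rN : r < N by rewrite /N ltnS; apply: leq_trans rR (ltrs rho).
have [D [DA DV DK]] := construct Q2 Qne rN e1N e2N e12.
exists D; split => //; apply: leq_trans DK _.
by rewrite leq_add2r leq_mul2l /= ltnS.
Qed.


Lemma arith (u W a t t' K : nat) : W < a * t -> a <= W -> t.-1 <= t' -> 1 < t ->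
  u * t' <= K * (W - a) -> u * t <= K * W.
Proof. move=> h1 h2 h3 h4 h5. nia. Qed.

Definition UU (R : 'I_m -> {set 'I_m}) (S : {set 'I_m}) := \bigcup_(e in S) R e.
Definition ww (R : 'I_m -> {set 'I_m}) (S : {set 'I_m}) := \sum_(e in S) #|R e|.
Definition KK := 4 * (trunc_log 2 s).+2 + 1.

Lemma ww_sub R (S1 S2 : {set 'I_m}) : S1 \subset S2 -> ww R S1 <= ww R S2.
Proof.
move=> sub; rewrite /ww [X in _ <= X](big_setID S1) /= (setIidPr sub).
exact: leq_addr.
Qed.

Lemma VS_sub Q (S1 S2 : {set 'I_m}) : S1 \subset S2 -> VS Q S1 \subset VS Q S2.
Proof. by move=> sub; apply/bigcupsP => e eS; apply: bigcup_sup; exact: (subsetP sub). Qed.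

Lemma card_del (T : finType) (A : {set T}) e : e \in A -> #|A :\ e| = #|A| - 1.
Proof. by move=> eA; rewrite [#|A|](cardsD1 e) eA add1n subn1. Qed.

Variable Q0 : 'I_m -> {set 'I_s}.

Definition inv (A : {set 'I_m}) (Q : 'I_m -> {set 'I_s}) (R : 'I_m -> {set 'I_m}) := (forall e, e \in A -> #|Q e| <= 2) /\
  (forall S : {set 'I_m}, S \subset A -> #|S| + #|VS Q0 (UU R S)| <= #|UU R S| + #|VS Q S|).

Lemma claim n : forall (A : {set 'I_m}) (Q : 'I_m -> {set 'I_s}) (R : 'I_m -> {set 'I_m}), #|A| <= n -> inv A Q R -> #|VS Q A| < #|A| ->
  exists U0 : {set 'I_m}, #|VS Q0 U0| < #|U0| /\
     #|U0| * (#|A| - #|VS Q A|) <= KK * ww R A.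
Proof.
elim: n => [|n IH] A Q R.
  by rewrite leqn0 => /eqP -> _; rewrite ltn0.
move=> An [Q2 IR] VA.
case: (boolP [exists x, deg Q A x == 1]) => [/existsP[x /eqP dx]|nd1].
  have /cards1P[e he] : #|[set f in A | x \in Q f]| == 1 by apply/eqP.
  have : e \in [set f in A | x \in Q f] by rewrite he set11.
  rewrite inE => /andP[eA xe].
  have sub : VS Q (A :\ e) \subset VS Q A :\ x.
    apply/bigcupsP => f /setD1P[fe fA]; apply/subsetP => y yf.
    rewrite !inE; apply/andP; split; last by apply/bigcupP; exists f.
    apply/negP => /eqP yx; move: yf; rewrite yx => xf.
    have : f \in [set e] by rewrite -he inE fA xf.
    by rewrite inE (negbTE fe).
  have xV : x \in VS Q A by apply/bigcupP; exists e.
  have cV : #|VS Q (A :\ e)| <= #|VS Q A| - 1.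
    by apply: leq_trans (subset_leq_card sub) _; rewrite (card_del xV).
  have VA0 : 0 < #|VS Q A| by apply/card_gt0P; exists x.
  have cA := card_del eA.
  have [|||U0 [U0d U0b]] := IH (A :\ e) Q R.
  - by rewrite cA; move: An; case: #|A| => // a; rewrite subn1 /= ltnS.
  - split; first by move=> f /setD1P[_ fA]; exact: Q2.
    by move=> S Ssub; apply: IR; apply: subset_trans Ssub (subD1set _ _).
  - rewrite cA; apply: leq_ltn_trans cV _. lia.
  exists U0; split => //; apply: leq_trans (leq_trans _ U0b) _.
    by apply: leq_mul => //; rewrite cA; lia.
  by rewrite leq_mul2l ww_sub ?orbT // subD1set.
case: (boolP [exists x, deg Q A x == 2]) => [/existsP[x /eqP dx]|nd2].
  have /cards2P[e1 [e2 [e12 he]]] : #|[set f in A | x \in Q f]| == 2 by apply/eqP.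
  have : e1 \in [set f in A | x \in Q f] by rewrite he !inE eqxx.
  rewrite inE => /andP[e1A xe1].
  have : e2 \in [set f in A | x \in Q f] by rewrite he !inE eqxx orbT.
  rewrite inE => /andP[e2A xe2].
  have xo : forall f, f \in A -> x \in Q f -> (f == e1) || (f == e2).
    move=> f fA xf; have : f \in [set f in A | x \in Q f] by rewrite inE fA xf.
    by rewrite he !inE.
  pose A' := A :\ e2.
  pose Q' := fun f => if f == e1 then (Q e1 :|: Q e2) :\ x else Q f.
  pose R' := fun f => if f == e1 then R e1 :|: R e2 else R f.
  have e1A' : e1 \in A' by rewrite !inE e12 e1A.
  have sub : VS Q' A' \subset VS Q A :\ x.
    apply/bigcupsP => f /setD1P[fe2 fA]; rewrite /Q' /=; case: (eqVneq f e1) => [_|fe1].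
      apply/subsetP => y; rewrite !inE => /andP[yx /orP[] yQ]; rewrite yx /=;
      apply/bigcupP; [by exists e1|by exists e2].
    apply/subsetP => y yf; rewrite !inE; apply/andP; split; last by apply/bigcupP; exists f.
    apply/negP => /eqP yx; move: yf; rewrite yx => xf.
    by have := xo f fA xf; rewrite (negbTE fe1) (negbTE fe2).
  have xV : x \in VS Q A by apply/bigcupP; exists e1.
  have cV : #|VS Q' A'| <= #|VS Q A| - 1.
    by apply: leq_trans (subset_leq_card sub) _; rewrite (card_del xV).
  have cA : #|A'| = #|A| - 1 by exact: card_del.
  have w1 : ww R A = #|R e2| + ww R A'.
    rewrite /ww (bigD1 e2) //=; congr (_ + _); apply: eq_bigl => f.
    by rewrite !inE andbC.
  have w2 : ww R A' = #|R e1| + \sum_(f in A' | f != e1) #|R f| by rewrite /ww (bigD1 e1).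
  have w3 : ww R' A' = #|R e1 :|: R e2| + \sum_(f in A' | f != e1) #|R f|.
    rewrite /ww (bigD1 e1) //=; congr (_ + _); first by rewrite /R' eqxx.
    by apply: eq_bigr => f /andP[_ fe]; rewrite /R' (negbTE fe).
  have ww' : ww R' A' <= ww R A.
    rewrite w3 w1 w2 addnA leq_add2r; have [h _] := leq_card_setU (R e1) (R e2).
    by rewrite addnC.
  have [|||U0 [U0d U0b]] := IH A' Q' R'.
  - by rewrite cA; move: An; case: #|A| => // a; rewrite subn1 /= ltnS.
  - split.
      move=> f /setD1P[_ fA]; rewrite /Q' /=; case: eqP => [_|_]; last exact: Q2.
      rewrite setDUl; have [h _] := leq_card_setU (Q e1 :\ x) (Q e2 :\ x); apply: leq_trans h _.
      rewrite (card_del xe1) (card_del xe2).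
      exact: leq_trans (leq_add (leq_sub2r 1 (Q2 _ e1A)) (leq_sub2r 1 (Q2 _ e2A))) _.
    move=> S Ssub; have SA : S \subset A by apply: subset_trans Ssub (subD1set _ _).
    case: (boolP (e1 \in S)) => e1S; last first.
      have -> : VS Q' S = VS Q S.
        by apply: eq_bigr => f fS; rewrite /Q' /=; case: (eqVneq f e1) => // fe; move: e1S; rewrite -fe fS.
      have -> : UU R' S = UU R S.
        by apply: eq_bigr => f fS; rewrite /R' /=; case: (eqVneq f e1) => // fe; move: e1S; rewrite -fe fS.
      exact: IR.
    have e2S : e2 \notin S by apply/negP => e2S; have := subsetP Ssub _ e2S; rewrite !inE eqxx.
    have S0A : e2 |: S \subset A by rewrite subUset sub1set e2A SA.
    have hU : UU R' S = UU R (e2 |: S).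
      apply/eqP; rewrite eqEsubset; apply/andP; split.
        apply/bigcupsP => f fS; rewrite /R' /=; case: eqP => [_|_].
          rewrite subUset; apply/andP; split; apply: bigcup_sup.
            by rewrite !inE e1S orbT.
          by rewrite !inE eqxx.
        by apply: bigcup_sup; rewrite !inE fS orbT.
      apply/bigcupsP => f; rewrite !inE => /orP[/eqP->|fS].
        apply: subset_trans (bigcup_sup _ e1S); rewrite /R' eqxx; exact: subsetUr.
      apply: subset_trans (bigcup_sup _ fS); rewrite /R' /=; case: eqP => [->|_] //; exact: subsetUl.
    have hV : VS Q (e2 |: S) \subset x |: VS Q' S.
      apply/bigcupsP => f; rewrite !inE => /orP[/eqP->|fS]; apply/subsetP => y yQ; rewrite !inE.
        case: (eqVneq y x) => [//|yx] /=; apply/bigcupP; exists e1 => //.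
        by rewrite /Q' /= eqxx !inE yx yQ orbT.
      case: (eqVneq y x) => [//|yx] /=; apply/bigcupP; exists f => //.
      rewrite /Q' /=; case: (eqVneq f e1) => [fe|//].
      by rewrite !inE yx -fe yQ.
    have h1 := IR _ S0A.
    rewrite -hU cardsU1 e2S in h1.
    have h2 : #|VS Q (e2 |: S)| <= (#|VS Q' S|).+1.
      by apply: leq_trans (subset_leq_card hV) _; rewrite cardsU1; case: (_ \notin _).
    have h3 := leq_trans h1 (leq_add (leqnn _) h2).
    by rewrite /= add1n addSn addnS ltnS in h3.
  - rewrite cA; have : 0 < #|VS Q A| by apply/card_gt0P; exists x. lia.
  exists U0; split => //; apply: leq_trans (leq_trans _ U0b) _.
    apply: leq_mul => //; rewrite cA; have : 0 < #|VS Q A| by apply/card_gt0P; exists x.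
    lia.
  by rewrite leq_mul2l ww' orbT.
case: (boolP [exists e in A, ww R A < #|R e| * (#|A| - #|VS Q A|)]) => [/existsP[e /andP[eA heavy]]|nh].
  have wd : ww R A = #|R e| + ww R (A :\ e).
    rewrite /ww (bigD1 e) //=; congr (_ + _); apply: eq_bigl => f.
    by rewrite !inE andbC.
  have t1 : 1 < #|A| - #|VS Q A|.
    rewrite ltnNge; apply/negP => h; move: heavy; rewrite wd; move: h.
    case: (_ - _) => [|[|]] //; first by rewrite muln0.
    by rewrite muln1 => _; rewrite ltnNge leq_addr.
  have cA := card_del eA.
  have cV : #|VS Q (A :\ e)| <= #|VS Q A| by apply: subset_leq_card; apply: VS_sub; exact: subD1set.
  have [|||U0 [U0d U0b]] := IH (A :\ e) Q R.
  - by rewrite cA; move: An; case: #|A| => // a; rewrite subn1 /= ltnS.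
  - split; first by move=> f /setD1P[_ fA]; exact: Q2.
    by move=> S Ssub; apply: IR; apply: subset_trans Ssub (subD1set _ _).
  - rewrite cA; lia.
  exists U0; split => //.
  apply: (arith (a := #|R e|) (t' := #|A :\ e| - #|VS Q (A :\ e)|)) => //.
  - by rewrite wd leq_addr.
  - rewrite cA; lia.
  - by rewrite wd addKn.
have deg3 : forall x, deg Q A x != 0 -> 2 < deg Q A x.
  move=> x; move/existsP: nd1 => nd1; move/existsP: nd2 => nd2.
  have h1 : deg Q A x != 1 by apply/negP => h; apply: nd1; exists x.
  have h2 : deg Q A x != 2 by apply/negP => h; apply: nd2; exists x.
  move: h1 h2; case: (deg Q A x) => [|[|[|d]]] //.
have A0 : A != set0 by apply/set0Pn; apply/card_gt0P; apply: leq_ltn_trans VA.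
have [D [DA DV DK]] := lemmaA Q2 deg3 A0.
exists (UU R D); split.
  have := IR D DA; lia.
apply: leq_trans (_ : ww R D * (#|A| - #|VS Q A|) <= _).
  by apply: leq_mul => //; exact: card_bigcup_le.
rewrite /ww big_distrl /=.
apply: leq_trans (_ : \sum_(e in D) ww R A <= _).
  apply: leq_sum => e eD; rewrite leqNgt; apply/negP => h.
  by move/existsP: nh; apply; exists e; rewrite (subsetP DA) //=.
by rewrite sum_nat_const leq_mul2r DK orbT.
Qed.

End Graph.

Section Info.
Variables (F : finFieldType) (n m k s : nat) (f : {ffun 'I_n -> F} -> 'I_m -> F).

Lemma extend_set (S : {set 'I_m}) : #|S| <= k -> k <= m ->
  exists T : {set 'I_m}, S \subset T /\ #|T| = k.
Proof.
move=> Sk km; have := subnK Sk; move: (k - #|S|) => d; elim: d S Sk => [|d IH] S Sk hd.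
  by exists S; split => //; rewrite -hd add0n.
have Sm : #|S| < m by lia.
have /set0Pn[i iS] : ~: S != set0.
  rewrite -card_gt0; have := cardsC S; rewrite card_ord; lia.
have [||T [sT cT]] := IH (i |: S).
- rewrite cardsU1; move: iS; rewrite inE => ->; lia.
- rewrite cardsU1; move: iS; rewrite inE => ->; lia.
exists T; split => //; apply: subset_trans sT; exact: subsetUr.
Qed.

Lemma surj (T : {set 'I_m}) : kwise_independent k f -> #|T| = k ->
  forall a : {ffun 'I_m -> F}, exists x, forall i, i \in T -> f x i = a i.
Proof.
move=> hk hT a; have h := hk T hT a.
have : 0 < #|[set x : {ffun 'I_n -> F} | [forall i in T, f x i == a i]]|.
  have q0 : 0 < #|F| by apply/card_gt0P; exists 0%R.
  move: h; case: #|_| => //; rewrite mul0n => /esym/eqP; by rewrite expn_eq0 (negbTE (lt0n_neq0 q0)).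
case/card_gt0P => x; rewrite inE => /forallP hx; exists x => i iT.
by have := hx i; rewrite iT /= => /eqP.
Qed.

Lemma info (P : {ffun 'I_n -> F} -> {ffun 'I_s -> F}) (Q : 'I_m -> {set 'I_s})
  (g : 'I_m -> {ffun 'I_s -> F} -> F) :
  k <= m -> kwise_independent k f ->
  (forall i (c c' : {ffun 'I_s -> F}), (forall j, j \in Q i -> c j = c' j) -> g i c = g i c') ->
  (forall x i, f x i = g i (P x)) ->
  forall S : {set 'I_m}, #|S| <= k -> #|S| <= #|\bigcup_(i in S) Q i|.
Proof.
move=> km hk hloc hfg S Sk.
have [T [sT cT]] := extend_set Sk km.
have hs : forall a : {ffun 'I_m -> F}, exists x : {ffun 'I_n -> F}, [forall i in T, f x i == a i].
  move=> a; have [x hx] := surj hk cT a; exists x; apply/forall_inP => i iT; apply/eqP; exact: hx.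
pose xa (a : {ffun 'I_m -> F}) := xchoose (hs a).
have xaP : forall a i, i \in T -> f (xa a) i = a i.
  by move=> a i iT; have /forall_inP/(_ i iT)/eqP := xchooseP (hs a).
pose U := \bigcup_(i in S) Q i.
pose ext (b : {ffun {i : 'I_m | i \in S} -> F}) : {ffun 'I_m -> F} :=
  [ffun i => if insub i is Some j then b j else 0%R].
pose phi (b : {ffun {i : 'I_m | i \in S} -> F}) : {ffun {j : 'I_s | j \in U} -> F} :=
  [ffun j => P (xa (ext b)) (val j)].
have inj : injective phi.
  move=> b1 b2 e; apply/ffunP => j.
  have jT : val j \in T by apply: (subsetP sT); exact: valP.
  have e1 : b1 j = ext b1 (val j) by rewrite ffunE valK.
  have e2 : b2 j = ext b2 (val j) by rewrite ffunE valK.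
  rewrite e1 e2 -!xaP // !hfg; apply: hloc => c cQ.
  have cU : c \in U by apply/bigcupP; exists (val j) => //; exact: valP.
  have := congr1 (fun h : {ffun {j : 'I_s | j \in U} -> F} => h (exist _ c cU)) e.
  by rewrite /phi !ffunE /=.
have q1 : 1 < #|F|.
  by apply/card_gt1P; exists 0%R, 1%R; rewrite eq_sym oner_neq0 inE.
have := leq_card phi inj; rewrite !card_ffun !card_sig leq_exp2l //.
Qed.

End Info.

Unset Implicit Arguments.
Local Open Scope ring_scope.

Lemma bigcup_singl (m : nat) (S : {set 'I_m}) : \bigcup_(e in S) [set e] = S.
Proof.
apply/setP => e; apply/bigcupP/idP => [[f fS]|eS]; first by rewrite inE => /eqP->.
by exists e; rewrite ?inE.
Qed.

Lemma log2_ge (R : realType) (s : nat) : (0 < s)%N -> (trunc_log 2 s)%:R <= log2 (s%:R : R).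
Proof.
move=> s0; rewrite /log2 ler_pdivlMr; last by apply: ln_gt0; rewrite ltr1n.
rewrite mulr_natl -lnXn // ler_ln ?posrE ?exprn_gt0 ?ltr0n //.
by rewrite -natrX ler_nat trunc_logP.
Qed.

Theorem mainTheorem2 (R : realType) (F : finFieldType) (n m k s : nat)
  (f : {ffun 'I_n -> F} -> 'I_m -> F) :
  (k <= m)%N ->
  kwise_independent k f ->
  nonadaptive_ds f s 2 ->
  (2 <= s)%N ->
  8 * log2 (s%:R : R) < k%:R ->
  m%:R - 16 * m%:R * log2 (s%:R : R) / k%:R <= (s%:R : R).
Proof.
move=> km hk [P [Q [g [hQ hloc hfg]]]] s2 hlog.
have HC := info km hk hloc hfg.
have ln2 : 0 < ln (2 : R) by apply: ln_gt0; rewrite ltr1n.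
have L0 : 0 <= log2 (s%:R : R).
  rewrite /log2 divr_ge0 ?(ltW ln2) // ln_ge0 // ler1n; exact: ltnW.
have k0 : 0 < (k%:R : R) by apply: le_lt_trans hlog; apply: mulr_ge0.
have X0 : 0 <= 16 * m%:R * log2 (s%:R : R) / k%:R.
  by apply: divr_ge0; [apply: mulr_ge0; [apply: mulr_ge0|]|apply: ltW].
case: (leqP m s) => [ms|sm].
  have : (m%:R : R) <= s%:R by rewrite ler_nat.
  lra.
have lam1 : (0 < trunc_log 2 s)%N by rewrite trunc_log_gt0.
have VT : (#|VS Q setT| < #|[set: 'I_m]|)%N.
  rewrite cardsT card_ord; apply: leq_ltn_trans sm.
  by apply: leq_trans (max_card _) _; rewrite card_ord.
have hinv : @inv s m Q [set: 'I_m] Q (fun e => [set e]).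
  split => [e _|S _]; first exact: hQ.
  by rewrite /UU bigcup_singl.
have [U0 [U0d U0b]] := claim (leqnn #|[set: 'I_m]|) hinv VT.
have ww1 : ww (fun e : 'I_m => [set e]) [set: 'I_m] = m.
  rewrite /ww (eq_bigr (fun _ => 1%N)) ?sum1_card ?cardsT ?card_ord // => e _.
  by rewrite cards1.
have kU : (k < #|U0|)%N.
  rewrite ltnNge; apply/negP => h; have := HC _ h; rewrite leqNgt.
  by move: U0d; rewrite /VS => ->.
have Vs : (#|VS Q [set: 'I_m]| <= s)%N.
  by apply: leq_trans (max_card _) _; rewrite card_ord.
have tb : (m - s <= #|[set: 'I_m]| - #|VS Q [set: 'I_m]|)%N.
  by rewrite cardsT card_ord; apply: leq_sub2l.
have nat1 : (k * (m - s) <= 16 * trunc_log 2 s * m)%N.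
  apply: leq_trans (leq_mul (ltnW kU) tb) _.
  apply: leq_trans U0b _; rewrite ww1 /KK leq_mul2r; apply/orP; right.
  lia.
have r1 : (k%:R * (m%:R - s%:R) : R) <= 16 * (trunc_log 2 s)%:R * m%:R.
  have := nat1; rewrite -(ler_nat R) natrM natrB; last exact: ltnW.
  move=> h; apply: (le_trans h); rewrite natrM natrM.
  exact: lexx.
have r2 : (16 * (trunc_log 2 s)%:R * m%:R : R) <= 16 * m%:R * log2 (s%:R : R).
  rewrite mulrAC ler_wpM2l ?log2_ge //; last by rewrite ltnW.
  by apply: mulr_ge0.
have r3 : m%:R - s%:R <= 16 * m%:R * log2 (s%:R : R) / k%:R.
  by rewrite ler_pdivlMr // mulrC; apply: le_trans r1 r2.
lra.
Qed.
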